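(* Let $S\subseteq\{1,\dots,p\}$, let $\rho_\lambda$ be $\mu$-amenable, and suppose $\mathcal L_n$ satisfies the $(\alpha,\tau)$ joint RSC condition. Let $\theta^\ast,\hat\theta\in\mathbb{R}^{p\times q}$ have all rows outside $S$ equal to zero, with $\|\theta^\ast\|_{1,2}\le R$ and $\|\hat\theta\|_{1,2}\le R$. Suppose $\hat\theta$ is a zero-subgradient point of the oracle objective, i.e. there is $\hat z\in\partial\|\hat\theta\|_{1,2}$ such that the rows indexed by $S$ of $\nabla\bar{\mathcal L}_n(\hat\theta)+\lambda\hat z$ vanish. Assume further $\|\nabla\mathcal L_n(\theta^\ast)\|_{\infty,2}\le\lambda/2$, $\lambda\le\alpha_2/(6R)$ and $n\ge\frac{16R^2\tau_2^2}{\alpha_2^2}\log p$. Then $\|\hat\theta-\theta^\ast\|_F\le1$.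
   Context: Notation: for $A\in\mathbb{R}^{p\times q}$, $A_{i:}$ row $i$, $A_{:j}$ column $j$; $\|A\|_{a,b}=(\sum_i\|A_{i:}\|_b^a)^{1/a}$ ($a=\infty$: max over $i$); $\|A\|_F$ Frobenius norm; $\langle A,B\rangle=\mathrm{tr}(A^TB)$. $\mathcal L_n(\theta)=\sum_{j=1}^q[\frac12\theta_{:j}^T\hat\Gamma^{(j)}\theta_{:j}-(\hat\gamma^{(j)})^T\theta_{:j}]$ for given symmetric PSD $\hat\Gamma^{(j)}$ and vectors $\hat\gamma^{(j)}$. Joint RSC: $\langle\nabla\mathcal L_n(\theta+\Delta)-\nabla\mathcal L_n(\theta),\Delta\rangle\ge\alpha_1\|\Delta\|_F^2-\tau_1\frac{\log p}{n}\|\Delta\|_{1,2}^2$ if $\|\Delta\|_F\le1$, and $\ge\alpha_2\|\Delta\|_F-\tau_2\sqrt{\frac{\log p}{n}}\|\Delta\|_{1,2}$ if $\|\Delta\|_F\ge1$. $\mu$-amenable: $\rho_\lambda$ symmetric with $\rho_\lambda(0)=0$, nondecreasing on $\mathbb{R}^+$, $\rho_\lambda(t)/t$ nonincreasing on $\mathbb{R}^+$, differentiable for $t\ne0$, $\rho_\lambda(t)+\frac\mu2t^2$ convex, $\lim_{t\to0^+}\rho'_\lambda(t)=\lambda$. $q_\lambda(t)=\lambda|t|-\rho_\lambda(t)$, $\bar{\mathcal L}_n(\theta)=\mathcal L_n(\theta)-\sum_iq_\lambda(\|\theta_{i:}\|_2)$. Subdifferential: $z\in\partial\|\theta\|_{1,2}$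 iff $z_{i:}=\theta_{i:}/\|\theta_{i:}\|_2$ when $\theta_{i:}\ne0$ and $\|z_{i:}\|_2\le1$ when $\theta_{i:}=0$. *)

(* Defs.v *)
From HB Require Import structures.
From mathcomp Require Import all_boot all_order all_algebra.
From mathcomp Require Import all_classical all_reals all_analysis.
Set Implicit Arguments. Unset Strict Implicit. Unset Printing Implicit Defensive.
Import Order.TTheory GRing.Theory Num.Theory.
Import numFieldNormedType.Exports.
Local Open Scope classical_set_scope.
Local Open Scope ring_scope.

Section Defs.
Variable R : realType.

Definition vnorm (q : nat) (v : 'rV[R]_q) : R := Num.sqrt (\sum_j v 0 j ^+ 2).

Definition rnorm (p q : nat) (A : 'M[R]_(p, q)) (i : 'I_p) : R := vnorm (row i A).

Definition norm12 (p q : nat) (A : 'M[R]_(p, q)) : R := \sum_i rnorm A i.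

Definition norminf2 (p q : nat) (A : 'M[R]_(p, q)) : R :=
  \big[Num.max/0]_i rnorm A i.

Definition frob (p q : nat) (A : 'M[R]_(p, q)) : R :=
  Num.sqrt (\sum_i \sum_j A i j ^+ 2).

Definition minner (p q : nat) (A B : 'M[R]_(p, q)) : R := \tr (A^T *m B).

Definition Ln (p q : nat) (Gamma : 'I_q -> 'M[R]_p) (gamma : 'I_q -> 'cV[R]_p)
  (theta : 'M[R]_(p, q)) : R :=
  \sum_j ((2^-1) * ((col j theta)^T *m Gamma j *m col j theta) 0 0
          - ((gamma j)^T *m col j theta) 0 0).

(* gradient of L_n (Gamma^(j) symmetric): column j is Gamma^(j) theta_{:j} - gamma^(j) *)
Definition gradL (p q : nat) (Gamma : 'I_q -> 'M[R]_p) (gamma : 'I_q -> 'cV[R]_p)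
  (theta : 'M[R]_(p, q)) : 'M[R]_(p, q) :=
  \matrix_(i, j) ((Gamma j *m col j theta) i 0 - gamma j i 0).

Definition qlam (lam : R) (rho : R -> R) (t : R) : R := lam * `|t| - rho t.

Definition barLn (p q : nat) (Gamma : 'I_q -> 'M[R]_p) (gamma : 'I_q -> 'cV[R]_p)
  (lam : R) (rho : R -> R) (theta : 'M[R]_(p, q)) : R :=
  Ln Gamma gamma theta - \sum_i qlam lam rho (rnorm theta i).

(* gradient of barL_n: gradL minus the gradient of sum_i q_lambda(||theta_i||),
   whose row i is q_lambda'(||theta_i||) theta_i/||theta_i|| when theta_i <> 0
   (q_lambda'(t) = lambda - rho'(t) for t > 0), and 0 when theta_i = 0
   (q_lambda is differentiable at 0 with derivative 0 for amenable rho). *)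
Definition gradbarL (p q : nat) (Gamma : 'I_q -> 'M[R]_p) (gamma : 'I_q -> 'cV[R]_p)
  (lam : R) (rho : R -> R) (theta : 'M[R]_(p, q)) : 'M[R]_(p, q) :=
  gradL Gamma gamma theta -
  \matrix_(i, j) (if row i theta == 0 then 0
                  else (lam - derive1 rho (rnorm theta i)) * theta i j / rnorm theta i).

Definition subgrad12 (p q : nat) (theta z : 'M[R]_(p, q)) : Prop :=
  forall i : 'I_p,
    (row i theta != 0 -> row i z = (rnorm theta i)^-1 *: row i theta) /\
    (row i theta = 0 -> rnorm z i <= 1).

Definition joint_RSC (p q n : nat) (Gamma : 'I_q -> 'M[R]_p) (gamma : 'I_q -> 'cV[R]_p)
  (alpha1 alpha2 tau1 tau2 : R) : Prop :=
  forall theta Delta : 'M[R]_(p, q),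
    (frob Delta <= 1 ->
       alpha1 * frob Delta ^+ 2 - tau1 * (ln p%:R / n%:R) * norm12 Delta ^+ 2
       <= minner (gradL Gamma gamma (theta + Delta) - gradL Gamma gamma theta) Delta) /\
    (1 <= frob Delta ->
       alpha2 * frob Delta - tau2 * Num.sqrt (ln p%:R / n%:R) * norm12 Delta
       <= minner (gradL Gamma gamma (theta + Delta) - gradL Gamma gamma theta) Delta).

Definition convex_fun (f : R -> R) : Prop :=
  forall x y a : R, 0 <= a -> a <= 1 ->
    f (a * x + (1 - a) * y) <= a * f x + (1 - a) * f y.

Definition amenable (mu lam : R) (rho : R -> R) : Prop :=
  [/\ 0 <= mu,
      (forall t, rho (- t) = rho t),
      rho 0 = 0,
      (forall s t, 0 <= s -> s <= t -> rho s <= rho t) &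
      (forall s t, 0 < s -> s <= t -> rho t / t <= rho s / s)] /\
  [/\ (forall t, t != 0 -> derivable rho t 1),
      convex_fun (fun t => rho t + mu / 2 * t ^+ 2) &
      derive1 rho t @[t --> 0^'+] --> lam].

End Defs.

(* Main.v *)
Require Import Defs.
From HB Require Import structures.
From mathcomp Require Import all_boot all_order all_algebra.
From mathcomp Require Import all_classical all_reals all_analysis.
From mathcomp Require Import ring lra.
Import Order.TTheory GRing.Theory Num.Theory.
Import numFieldNormedType.Exports.
Local Open Scope ring_scope.

Set Implicit Arguments. Unset Strict Implicit.
Section Helpers.
Local Open Scope classical_set_scope.
Local Open Scope ring_scope.
Variable R : realType.

Lemma dq_le (f : R -> R) (t M d : R) : derivable f t 1 -> 0 < d ->
  (forall h : R, h != 0 -> `|h| < d -> h^-1 * (f (h + t) - f t) <= M) ->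
  derive1 f t <= M.
Proof.
move=> df d0 H.
rewrite derive1E /derive.
apply: (cvgr_to_le df).
near=> h.
have h0 : h != 0 by near: h; exact: nbhs_dnbhs_neq.
have hd : `|h| < d by near: h; exact: dnbhs0_lt.
rewrite /= scaler1; exact: H.
Unshelve. all: end_near. Qed.
Lemma dq_ge (f : R -> R) (t M d : R) : derivable f t 1 -> 0 < d ->
  (forall h : R, h != 0 -> `|h| < d -> M <= h^-1 * (f (h + t) - f t)) ->
  M <= derive1 f t.
Proof.
move=> df d0 H.
rewrite derive1E /derive.
apply: (cvgr_to_ge df).
near=> h.
have h0 : h != 0 by near: h; exact: nbhs_dnbhs_neq.
have hd : `|h| < d by near: h; exact: dnbhs0_lt.
rewrite /= scaler1; exact: H.
Unshelve. all: end_near. Qed.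

Lemma near_right0 (P : R -> Prop) : (\forall x \near 0^'+, P x) ->
  exists2 d : R, 0 < d & forall x, 0 < x -> x < d -> P x.
Proof.
move=> /nbhs_ballP [d /= d0 Hd]; exists d => // x x0 xd.
apply: Hd => //.
rewrite /ball /= sub0r normrN gtr0_norm //.
Qed.
Lemma rho_props (mu lam : R) (rho : R -> R) : amenable mu lam rho ->
  forall t, 0 < t -> 0 <= derive1 rho t /\ derive1 rho t <= lam.
Proof.
case=> -[mu0 rhoN rho0 mono ratio] [dr cvx lim] t t0.
have rge0 x : 0 <= x -> 0 <= rho x by move=> x0; rewrite -rho0; apply: mono.
have dt : derivable rho t 1 := dr t (lt0r_neq0 t0).
have tn0 : t != 0 := lt0r_neq0 t0.
split.
  apply: (@dq_ge rho t 0 t dt t0) => h h0 ht.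
  case: (ltrgtP h 0) => [hn|hp|he]; last by rewrite he eqxx in h0.
  - rewrite ltr0_norm // in ht.
    apply: mulr_le0; first by rewrite invr_le0 ltW.
    rewrite subr_le0; apply: mono; lra.
  - apply: mulr_ge0; first by rewrite invr_ge0 ltW.
    rewrite subr_ge0; apply: mono; lra.
have dle : derive1 rho t <= rho t / t.
  apply: (@dq_le rho t (rho t / t) t dt t0) => h h0 ht.
  set r := rho t / t.
  have rt : rho t = r * t by rewrite /r divfK.
  case: (ltrgtP h 0) => [hn|hp|he]; last by rewrite he eqxx in h0.
  - rewrite ltr0_norm // in ht.
    have := ratio (h + t) t ltac:(lra) ltac:(lra).
    rewrite -/r ler_pdivlMr; last lra.
    move=> H1.
    rewrite -mulrNN -invrN ler_pdivrMl ?oppr_gt0 //.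
    rewrite rt; nra.
  - have := ratio t (h + t) t0 ltac:(lra).
    rewrite -/r ler_pdivrMr; last lra.
    move=> H1.
    rewrite ler_pdivrMl //.
    rewrite rt; nra.
apply: (le_trans dle).
apply/ler_addgt0Pr => e e0.
have [d d0 Hd] := near_right0 (@cvgr_le _ _ _ _ _ _ lim (lam + e / 2) ltac:(lra)).
set s := Num.min t (Num.min (d / 2) (2 * e / (mu + 1))).
have s0 : 0 < s.
  rewrite /s !lt_min t0 /=; apply/andP; split; first lra.
  apply: divr_gt0; lra.
have st : s <= t by rewrite /s ge_min lexx.
have sd : s < d.
  apply: (le_lt_trans (y := d / 2)); first by rewrite /s !ge_min lexx orbT.
  lra.
have smu : mu * s <= 2 * e.
  have : s <= 2 * e / (mu + 1) by rewrite /s !ge_min lexx !orbT.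
  rewrite ler_pdivlMr; last lra.
  nra.
have hd1 : forall x, x \in `]s / 2, s[%R -> is_derive x 1 rho (derive1 rho x).
  move=> x; rewrite in_itv /= => /andP[h1 h2].
  rewrite derive1E; apply: derivableP; apply: dr; apply: lt0r_neq0; lra.
have hc1 : {within `[s / 2, s]%classic, continuous rho}.
  apply: derivable_within_continuous => x; rewrite in_itv /= => /andP[h1 h2].
  apply: dr; apply: lt0r_neq0; lra.
have [c cI Hc] := @MVT R rho (derive1 rho) (s / 2) s ltac:(lra) hd1 hc1.
move: cI; rewrite in_itv /= => /andP[c1 c2].
have dc := Hd c ltac:(lra) ltac:(lra).
have cv := cvx s 0 (1 / 2) ltac:(lra) ltac:(lra).
rewrite mulr0 addr0 rho0 add0r expr0n /= mulr0 mulr0 addr0 in cv.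
have e1 : 1 / 2 * s = s / 2 by rewrite mul1r mulrC.
rewrite e1 in cv.
have pc : derive1 rho c * (s - s / 2) <= (lam + e / 2) * (s - s / 2).
  apply: ler_wpM2r => //; lra.
have pe : mu * s * s <= 2 * e * s by apply: ler_wpM2r => //; lra.
apply: (le_trans (ratio s t s0 st)).
rewrite ler_pdivrMr //.
nra.
Qed.
Definition dot (q : nat) (a b : 'I_q -> R) := \sum_j a j * b j.
Definition sq (q : nat) (a : 'I_q -> R) := \sum_j a j ^+ 2.

Lemma sq_ge0 q (a : 'I_q -> R) : 0 <= sq a.
Proof. by apply: sumr_ge0 => j _; apply: sqr_ge0. Qed.

Lemma lagrange q (a b : 'I_q -> R) : dot a b ^+ 2 <= sq a * sq b.
Proof.
have H : 0 <= \sum_i \sum_j (a i * b j - a j * b i) ^+ 2.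
  by apply: sumr_ge0 => i _; apply: sumr_ge0 => j _; apply: sqr_ge0.
have E : \sum_i \sum_j (a i * b j - a j * b i) ^+ 2 =
   2 * (sq a * sq b - dot a b ^+ 2).
  transitivity (\sum_i \sum_j (a i ^+ 2 * b j ^+ 2 + a j ^+ 2 * b i ^+ 2
                  - 2 * ((a i * b i) * (a j * b j)))).
    by apply: eq_bigr => i _; apply: eq_bigr => j _; ring.
  rewrite /sq /dot expr2 !mulr_suml.
  under eq_bigr => i _ do rewrite !sumrB !big_split /=.
  rewrite !sumrB !big_split /=.
  have e1 : \sum_i \sum_j a i ^+ 2 * b j ^+ 2 = \sum_i \sum_j a i ^+ 2 * b j ^+ 2 by [].
  have e2 : \sum_i \sum_j a j ^+ 2 * b i ^+ 2 = \sum_i \sum_j a i ^+ 2 * b j ^+ 2.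
    by rewrite exchange_big /=.
  rewrite e2.
  have e3 : \sum_i \sum_j 2 * (a i * b i * (a j * b j)) =
            2 * \sum_i \sum_j (a i * b i * (a j * b j)).
    by rewrite mulr_sumr; apply: eq_bigr => i _; rewrite mulr_sumr.
  rewrite e3.
  under [X in _ = 2 * (X - _)]eq_bigr => i _ do rewrite mulr_sumr.
  have e4 : forall i, \sum_j a i ^+ 2 * b j ^+ 2 = a i ^+ 2 * \sum_j b j ^+ 2.
    by move=> i; rewrite mulr_sumr.
  under eq_bigr => i _ do rewrite e4.
  under [X in _ = 2 * (_ - X)]eq_bigr => i _ do rewrite mulr_sumr.
  ring.
rewrite E in H.
rewrite -subr_ge0; lra.
Qed.

Lemma cs q (a b : 'I_q -> R) :
  `|dot a b| <= Num.sqrt (sq a) * Num.sqrt (sq b).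
Proof.
rewrite -sqrtrM ?sq_ge0 // -sqrtr_sqr.
by rewrite ler_sqrt ?lagrange // mulr_ge0 ?sq_ge0.
Qed.

Lemma rnormE p q (A : 'M[R]_(p, q)) i :
  rnorm A i = Num.sqrt (sq (fun j => A i j)).
Proof. by rewrite /rnorm /vnorm /sq; congr Num.sqrt; apply: eq_bigr => j _; rewrite mxE. Qed.

Lemma rnorm_ge0 p q (A : 'M[R]_(p, q)) i : 0 <= rnorm A i.
Proof. by rewrite rnormE sqrtr_ge0. Qed.

Lemma minnerE p q (A B : 'M[R]_(p, q)) :
  minner A B = \sum_i dot (fun j => A i j) (fun j => B i j).
Proof.
rewrite /minner /mxtrace /dot.
under eq_bigr => k _ do rewrite mxE.
rewrite exchange_big /=; apply: eq_bigr => i _; apply: eq_bigr => k _.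
by rewrite mxE.
Qed.

Lemma cs_rnorm p q (A B : 'M[R]_(p, q)) i :
  `|dot (fun j => A i j) (fun j => B i j)| <= rnorm A i * rnorm B i.
Proof. by rewrite !rnormE; apply: cs. Qed.

Lemma rnormB p q (A B : 'M[R]_(p, q)) i :
  rnorm (A - B) i <= rnorm A i + rnorm B i.
Proof.
have E : sq (fun j => (A - B) i j) =
   sq (fun j => A i j) - 2 * dot (fun j => A i j) (fun j => B i j) + sq (fun j => B i j).
  rewrite /sq /dot mulr_sumr -sumrB -big_split /=.
  by apply: eq_bigr => j _; rewrite !mxE; ring.
have c := cs_rnorm A B i.
have ha := rnorm_ge0 A i; have hb := rnorm_ge0 B i.
have sa : sq (fun j => A i j) = rnorm A i ^+ 2 by rewrite rnormE sqr_sqrtr ?sq_ge0.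
have sb : sq (fun j => B i j) = rnorm B i ^+ 2 by rewrite rnormE sqr_sqrtr ?sq_ge0.
rewrite rnormE E sa sb.
rewrite -(ger0_norm (addr_ge0 ha hb)) -sqrtr_sqr ler_sqrt; last by apply: sqr_ge0.
have h1 := ler_norm (- dot (fun j => A i j) (fun j => B i j)).
rewrite normrN in h1.
rewrite sqrrD; lra.
Qed.

Lemma rnorm_eq0 p q (A : 'M[R]_(p, q)) i : rnorm A i = 0 -> row i A = 0.
Proof.
rewrite rnormE => /eqP; rewrite sqrtr_eq0 => H.
have H0 : sq (fun j => A i j) = 0 by apply/eqP; rewrite eq_le H sq_ge0.
apply/rowP => j; rewrite !mxE.
have := psumr_eq0P (P := predT) (fun j _ => sqr_ge0 (A i j)) H0 (i := j) isT.
by move/eqP; rewrite sqrf_eq0 => /eqP.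
Qed.

Lemma rnorm_le_inf p q (A : 'M[R]_(p, q)) i : rnorm A i <= norminf2 A.
Proof. exact: le_bigmax. Qed.

Lemma norm12_ge0 p q (A : 'M[R]_(p, q)) : 0 <= norm12 A.
Proof. by apply: sumr_ge0 => i _; apply: rnorm_ge0. Qed.

Lemma norminf2_ge0 p q (A : 'M[R]_(p, q)) : 0 <= norminf2 A.
Proof.
rewrite /norminf2; elim/big_ind: _ => //.
- by move=> x y hx hy; rewrite le_max hx.
- by move=> i _; apply: rnorm_ge0.
Qed.


Lemma minnerB p q (A B D : 'M[R]_(p, q)) :
  minner (A - B) D = minner A D - minner B D.
Proof.
rewrite !minnerE -sumrB; apply: eq_bigr => i _.
by rewrite /dot -sumrB; apply: eq_bigr => j _; rewrite !mxE mulrDl mulNr.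
Qed.

Lemma rowb p q (G Z D : 'M[R]_(p, q)) i (c lam : R) :
  (forall j, G i j = c * Z i j) -> `|c| * rnorm Z i <= lam ->
  `|dot (fun j => G i j) (fun j => D i j)| <= lam * rnorm D i.
Proof.
move=> HG Hc.
have -> : dot (fun j => G i j) (fun j => D i j) =
          c * dot (fun j => Z i j) (fun j => D i j).
  by rewrite /dot mulr_sumr; apply: eq_bigr => j _; rewrite HG mulrA.
rewrite normrM.
apply: (le_trans (ler_wpM2l (normr_ge0 c) (cs_rnorm Z D i))).
rewrite mulrA; apply: ler_wpM2r => //; exact: rnorm_ge0.
Qed.

Lemma entryE p q (A Z : 'M[R]_(p, q)) (F : 'I_p -> 'I_q -> R) (lam : R) i j :
  (A - \matrix_(i, j) F i j + lam *: Z) i j = A i j - F i j + lam * Z i j.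
Proof. by rewrite !mxE. Qed.

End Helpers.
Unset Implicit Arguments. Set Strict Implicit.

Theorem lemma8 (R : realType) (p q n : nat)
  (Gamma : 'I_q -> 'M[R]_p) (gamma : 'I_q -> 'cV[R]_p)
  (S : {set 'I_p}) (mu lam : R) (rho : R -> R)
  (alpha1 alpha2 tau1 tau2 Rad : R)
  (theta_star theta_hat z_hat : 'M[R]_(p, q)) :
  (forall j, (Gamma j)^T = Gamma j) ->
  (forall j (v : 'cV[R]_p), 0 <= (v^T *m Gamma j *m v) 0 0) ->
  0 < alpha1 -> 0 < alpha2 -> 0 <= tau1 -> 0 <= tau2 ->
  amenable mu lam rho ->
  joint_RSC n Gamma gamma alpha1 alpha2 tau1 tau2 ->
  (forall i, i \notin S -> row i theta_star = 0) ->
  (forall i, i \notin S -> row i theta_hat = 0) ->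
  norm12 theta_star <= Rad ->
  norm12 theta_hat <= Rad ->
  subgrad12 theta_hat z_hat ->
  (forall i, i \in S -> row i (gradbarL Gamma gamma lam rho theta_hat + lam *: z_hat) = 0) ->
  norminf2 (gradL Gamma gamma theta_star) <= lam / 2 ->
  lam <= alpha2 / (6 * Rad) ->
  16 * Rad ^+ 2 * tau2 ^+ 2 / alpha2 ^+ 2 * ln p%:R <= n%:R ->
  frob (theta_hat - theta_star) <= 1.
Proof.
Proof.
move=> Gsym Gpsd a1 a2 t1 t2 amen rsc sstar shat Nstar Nhat sg zero ginf lamR nbig.
set D := theta_hat - theta_star.
have [Fle|Fgt] := lerP (frob D) 1; first done.
have [_ H2] := rsc theta_star D.
have E : theta_star + D = theta_hat by rewrite /D addrC subrK.
move: (H2 (ltW Fgt)); rewrite E minnerB => {}H2.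
have hlam0 : 0 <= lam.
  have := le_trans (norminf2_ge0 (gradL Gamma gamma theta_star)) ginf; lra.
have hRad0 : 0 <= Rad := le_trans (norm12_ge0 theta_star) Nstar.
have hN : norm12 D <= 2 * Rad.
  apply: (le_trans (y := norm12 theta_hat + norm12 theta_star)); last lra.
  rewrite /norm12 -big_split /=; apply: ler_sum => i _; exact: rnormB.
have hN0 : 0 <= norm12 D := norm12_ge0 D.
have hM2 : `|minner (gradL Gamma gamma theta_star) D| <= lam / 2 * norm12 D.
  rewrite minnerE; apply: (le_trans (ler_norm_sum _ _ _)).
  rewrite /norm12 mulr_sumr; apply: ler_sum => i _.
  apply: (le_trans (cs_rnorm _ _ i)); apply: ler_wpM2r; first exact: rnorm_ge0.
  exact: (le_trans (rnorm_le_inf _ i) ginf).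
set G := gradL Gamma gamma theta_hat.
have hM1 : `|minner G D| <= lam * norm12 D.
  rewrite minnerE; apply: (le_trans (ler_norm_sum _ _ _)).
  rewrite /norm12 mulr_sumr; apply: ler_sum => i _.
  case: (boolP (i \in S)) => iS; last first.
    have Dz j : D i j = 0.
      have h1 := congr1 (fun M : 'M[R]_(1, q) => M 0 j) (shat i iS).
      have h2 := congr1 (fun M : 'M[R]_(1, q) => M 0 j) (sstar i iS).
      rewrite /= !mxE in h1 h2.
      by rewrite /D !mxE h1 h2 subr0.
    rewrite /dot big1 ?normr0; last by move=> j _; rewrite Dz mulr0.
    by apply: mulr_ge0 => //; exact: rnorm_ge0.
  have Zj j : G i j - (if row i theta_hat == 0 then 0
        else (lam - derive1 rho (rnorm theta_hat i)) * theta_hat i j / rnorm theta_hat i)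
        + lam * z_hat i j = 0.
    have h1 := congr1 (fun M : 'M[R]_(1, q) => M 0 j) (zero i iS).
    by rewrite /= mxE /gradbarL entryE -/G [RHS]mxE in h1.
  case: (eqVneq (row i theta_hat) 0) => h.
    refine (@rowb _ _ _ G z_hat D i (- lam) lam _ _).
      by move=> j; have := Zj j; rewrite h eqxx subr0; lra.
    rewrite normrN ger0_norm //.
    have := (sg i).2 h; have := rnorm_ge0 z_hat i; nra.
  set r := rnorm theta_hat i.
  have r0 : 0 < r.
    rewrite lt_neqAle rnorm_ge0 andbT; apply/eqP => r0.
    by move: h; rewrite (rnorm_eq0 (esym r0)) eqxx.
  have [d0 d1] := rho_props amen r0.
  have zj j : z_hat i j = r^-1 * theta_hat i j.
    have h1 := congr1 (fun M : 'M[R]_(1, q) => M 0 j) ((sg i).1 h).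
    by rewrite /= !mxE in h1.
  apply: (@rowb _ _ _ G theta_hat D i (- (derive1 rho r / r)) lam).
    move=> j; have := Zj j; rewrite (negbTE h) zj -/r => e.
    have e2 : G i j = (lam - derive1 rho r) * theta_hat i j / r - lam * (r^-1 * theta_hat i j) by lra.
    rewrite e2; field; lra.
  rewrite normrN ger0_norm; last by apply: divr_ge0 => //; lra.
  rewrite divfK //; lra.
have hlR : lam * Rad <= alpha2 / 6.
  have [R0|Rp] := eqVneq Rad 0; first by rewrite R0 mulr0; lra.
  have Rp' : 0 < Rad by rewrite lt_neqAle eq_sym Rp hRad0.
  move: lamR; rewrite ler_pdivlMr; last lra.
  lra.
set L := ln (p%:R : R).
have L0 : 0 <= L.
  rewrite /L; have [->|p0] := eqVneq p 0%N; first by rewrite ln0.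
  by apply: ln_ge0; rewrite ler1n lt0n p0.
set s := Num.sqrt (L / n%:R).
have s0 : 0 <= s := sqrtr_ge0 _.
have htR : tau2 * s * Rad <= alpha2 / 4.
  have [n0|n0] := eqVneq n 0%N.
    have -> : s = 0 by rewrite /s n0 /= invr0 mulr0 sqrtr0.
    rewrite mulr0 mul0r; lra.
  have nR : 0 < (n%:R : R) by rewrite ltr0n lt0n n0.
  have sx : s ^+ 2 = L / n%:R by rewrite sqr_sqrtr // divr_ge0 // ler0n.
  have a2p : 0 < alpha2 ^+ 2 by rewrite exprn_gt0.
  move: nbig; rewrite mulrAC ler_pdivrMr // => nb2.
  have hb : tau2 ^+ 2 * Rad ^+ 2 * (L / n%:R) <= alpha2 ^+ 2 / 16.
    rewrite mulrA ler_pdivrMr //; rewrite -/L in nb2; nra.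
  have hx2 : (tau2 * s * Rad) ^+ 2 <= (alpha2 / 4) ^+ 2.
    rewrite !exprMn sx; lra.
  have x0 : 0 <= tau2 * s * Rad by rewrite !mulr_ge0.
  nra.
have p1 : tau2 * s * norm12 D <= tau2 * s * (2 * Rad).
  by apply: ler_wpM2l => //; rewrite mulr_ge0.
have p2 : lam * norm12 D <= lam * (2 * Rad) by apply: ler_wpM2l.
have m1 := ler_norm (minner G D).
have m2 := ler_norm (- minner (gradL Gamma gamma theta_star) D).
rewrite normrN in m2.
rewrite -/G -/L -/s in H2.
have : alpha2 * frob D <= alpha2 * 1 by lra.
rewrite ler_pM2l // => h; by move: (lt_le_trans Fgt h); rewrite ltxx.
Qed.
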